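(* The only solution $(m,p,q,x)$ in positive integers, with $p$ and $q$ odd primes, of the equation $$x^2+q^{2m}=2\cdot 17^p$$ is $(m,p,q,x)=(1,3,5,99)$. *)

(* Defs.v *)
From mathcomp Require Import all_boot.

(* Main.v *)
Require Import Defs.
From Stdlib Require Import ZArith Lia Ring List Wf_nat.
Local Open Scope Z_scope.


Record G := mkG { re : Z; im : Z }.
Definition g0 := mkG 0 0.
Definition g1 := mkG 1 0.
Definition gadd (a b : G) := mkG (re a + re b) (im a + im b).
Definition gmul (a b : G) := mkG (re a * re b - im a * im b) (re a * im b + im a * re b).
Definition gopp (a : G) := mkG (- re a) (- im a).
Definition gsub a b := gadd a (gopp b).
Definition gZ (k : Z) := mkG k 0.

Lemma G_eq a b : re a = re b -> im a = im b -> a = b.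
Proof. destruct a, b; simpl; intros; subst; reflexivity. Qed.

Lemma G_ring : ring_theory g0 g1 gadd gmul gsub gopp (@eq G).
Proof.
  constructor; intros; apply G_eq; unfold gsub, gadd, gmul, gopp, g0, g1; cbn [re im]; ring.
Qed.
Lemma G_morph : ring_morph g0 g1 gadd gmul gsub gopp (@eq G) 0 1 Z.add Z.mul Z.sub Z.opp Z.eqb gZ.
Proof.
  constructor; intros; try (apply G_eq; unfold gsub, gadd, gmul, gopp, g0, g1, gZ; cbn [re im]; ring).
  apply Z.eqb_eq in H; subst; reflexivity.
Qed.
Ltac Gcst t := match t with gZ ?z => match isZcst z with true => z | _ => constr:(NotConstant) end | g0 => constr:(0%Z) | g1 => constr:(1%Z) | _ => constr:(NotConstant) end.
Add Ring Gring : G_ring (morphism G_morph, constants [Gcst]).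

Fixpoint gpow (a : G) (n : nat) : G :=
  match n with O => g1 | S k => gmul (gpow a k) a end.

Lemma gpow_add a m n : gpow a (m + n) = gmul (gpow a m) (gpow a n).
Proof. induction n; simpl. rewrite Nat.add_0_r. ring. rewrite Nat.add_succ_r; simpl. rewrite IHn. ring. Qed.
Lemma gpow_mul a m n : gpow a (m * n) = gpow (gpow a m) n.
Proof. induction n; simpl. rewrite Nat.mul_0_r. reflexivity. rewrite Nat.mul_succ_r, gpow_add, IHn. ring. Qed.

Lemma re_mul a b : re (gmul a b) = re a * re b - im a * im b. Proof. reflexivity. Qed.
Lemma im_mul a b : im (gmul a b) = re a * im b + im a * re b. Proof. reflexivity. Qed.
Lemma re_add a b : re (gadd a b) = re a + re b. Proof. reflexivity. Qed.
Lemma im_add a b : im (gadd a b) = im a + im b. Proof. reflexivity. Qed.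
Lemma re_mk a b : re (mkG a b) = a. Proof. reflexivity. Qed.
Lemma im_mk a b : im (mkG a b) = b. Proof. reflexivity. Qed.
Lemma re_Z k : re (gZ k) = k. Proof. reflexivity. Qed.
Lemma im_Z k : im (gZ k) = 0. Proof. reflexivity. Qed.
Lemma re_sub a b : re (gsub a b) = re a - re b. Proof. reflexivity. Qed.
Lemma im_sub a b : im (gsub a b) = im a - im b. Proof. reflexivity. Qed.
Lemma re_1 : re g1 = 1. Proof. reflexivity. Qed.
Lemma im_1 : im g1 = 0. Proof. reflexivity. Qed.
Ltac gsimpl := rewrite ?re_mul, ?im_mul, ?re_add, ?im_add, ?re_mk, ?im_mk, ?re_Z, ?im_Z, ?re_sub, ?im_sub, ?re_1, ?im_1.


Definition zz (n : nat) : G := gmul (mkG 1 1) (gpow (mkG 4 1) n).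
Definition c n := re (zz n).
Definition d n := im (zz n).

Lemma zz_S n : zz (S n) = gmul (zz n) (mkG 4 1).
Proof. unfold zz; simpl. ring. Qed.
Lemma c_S n : c (S n) = 4 * c n - d n.
Proof. unfold c, d; rewrite zz_S; gsimpl; ring. Qed.
Lemma d_S n : d (S n) = c n + 4 * d n.
Proof. unfold c, d; rewrite zz_S; gsimpl; ring. Qed.
Lemma c_0 : c 0 = 1. Proof. reflexivity. Qed.
Lemma d_0 : d 0 = 1. Proof. reflexivity. Qed.

Lemma forallb_range (P : Z -> bool) (N : nat) :
  forallb P (map Z.of_nat (seq 0 N)) = true -> forall a, 0 <= a < Z.of_nat N -> P a = true.
Proof.
  intros H a Ha. rewrite forallb_forall in H. apply H.
  apply in_map_iff. exists (Z.to_nat a). split. lia. apply in_seq. lia.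
Qed.

Definition f17 a b := orb (negb ((a^2+b^2) mod 17 =? 0)) (orb ((a+4*b) mod 17 =? 0) ((a-4*b) mod 17 =? 0)).
Lemma f17_chk : forallb (fun a => forallb (fun b => f17 a b) (map Z.of_nat (seq 0 17))) (map Z.of_nat (seq 0 17)) = true.
Proof. vm_compute. reflexivity. Qed.

Lemma sq17 x y : (x^2 + y^2) mod 17 = 0 -> (x + 4*y) mod 17 = 0 \/ (x - 4*y) mod 17 = 0.
Proof.
  intro H.
  assert (Hf : f17 (x mod 17) (y mod 17) = true).
  { pose proof (forallb_range _ 17 f17_chk (x mod 17)) as H1.
    simpl in H1. specialize (H1 ltac:(pose proof (Z.mod_pos_bound x 17); lia)).
    apply (forallb_range _ 17 H1). pose proof (Z.mod_pos_bound y 17); simpl; lia. }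
  unfold f17 in Hf.
  set (a := x mod 17) in *. set (b := y mod 17) in *.
  assert (Ex : x = a + (x / 17) * 17) by (unfold a; pose proof (Z.div_mod x 17); lia).
  assert (Ey : y = b + (y / 17) * 17) by (unfold b; pose proof (Z.div_mod y 17); lia).
  set (q1 := x / 17) in *. set (q2 := y / 17) in *.
  assert (E1 : x^2 + y^2 = (a^2+b^2) + (2*a*q1 + 17*q1*q1 + 2*b*q2 + 17*q2*q2) * 17) by (rewrite Ex, Ey; ring).
  assert (E2 : x + 4*y = (a + 4*b) + (q1 + 4*q2) * 17) by (rewrite Ex, Ey; ring).
  assert (E3 : x - 4*y = (a - 4*b) + (q1 - 4*q2) * 17) by (rewrite Ex, Ey; ring).
  rewrite E1, Z_mod_plus_full in H. rewrite E2, E3, !Z_mod_plus_full.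
  rewrite H in Hf. change ((0 =? 0)) with true in Hf. cbn [negb orb] in Hf.
  destruct ((a + 4 * b) mod 17 =? 0) eqn:E4; [left; apply Z.eqb_eq; exact E4|].
  cbn [orb] in Hf. right; apply Z.eqb_eq; exact Hf.
Qed.


Definition Concl k x y := (Z.abs x = Z.abs (c k) /\ Z.abs y = Z.abs (d k)) \/ (Z.abs x = Z.abs (d k) /\ Z.abs y = Z.abs (c k)).
Definition Prim x y := ~ (x mod 17 = 0 /\ y mod 17 = 0).

Lemma c17 k : (c (S k) - 4 * d (S k)) mod 17 = 0.
Proof. rewrite c_S, d_S. replace (4 * c k - d k - 4 * (c k + 4 * d k)) with ((- d k) * 17) by ring. apply Z_mod_mult. Qed.

Lemma pow17S k : 17 ^ Z.of_nat (S k) = 17 * 17 ^ Z.of_nat k.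
Proof. rewrite Nat2Z.inj_succ, Z.pow_succ_r by lia. ring. Qed.

Lemma absE a b : Z.abs a = Z.abs b -> a = b \/ a = - b.
Proof. lia. Qed.

Lemma stepA k :
  (forall x y, x^2 + y^2 = 2 * 17 ^ Z.of_nat k -> Prim x y -> Concl k x y) ->
  forall x y, x^2 + y^2 = 2 * 17 ^ Z.of_nat (S k) -> Prim x y -> (x + 4*y) mod 17 = 0 -> Concl (S k) x y.
Proof.
  intros IH x y H HP Hm.
  set (t := (x + 4*y) / 17).
  assert (Ht : x + 4*y = 17 * t) by (unfold t; pose proof (Z.div_mod (x+4*y) 17); lia).
  set (x' := 4*t - y). set (y' := t).
  assert (Ex : x = 4*x' + y') by (unfold x', y'; lia).
  assert (Ey : y = 4*y' - x') by (unfold x', y'; lia).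
  clearbody x' y'. clear Ht. clearbody t. subst x y.
  rewrite pow17S in H.
  assert (H' : x'^2 + y'^2 = 2 * 17 ^ Z.of_nat k).
  { assert (E : (4*x'+y')^2 + (4*y'-x')^2 = 17 * (x'^2+y'^2)) by ring. lia. }
  assert (HP' : Prim x' y').
  { intros [h1 h2]. apply HP. split; Z.div_mod_to_equations; lia. }
  specialize (IH x' y' H' HP'). unfold Concl in *.
  rewrite c_S, d_S.
  assert (Hk : (c k = 1 /\ d k = 1) \/ (c k - 4 * d k) mod 17 = 0).
  { destruct k. left; split; reflexivity. right; apply c17. }
  unfold Prim in HP.
  destruct IH as [[h1 h2]|[h1 h2]]; apply absE in h1; apply absE in h2;
  destruct h1 as [h1|h1]; destruct h2 as [h2|h2]; subst x' y';
  destruct Hk as [[k1 k2]|k3]; try rewrite k1, k2;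
  first [left; split; lia | right; split; lia | exfalso; apply HP; split; Z.div_mod_to_equations; lia].
Qed.

Lemma rep k : forall x y, x^2 + y^2 = 2 * 17 ^ Z.of_nat k -> Prim x y -> Concl k x y.
Proof.
  induction k; intros x y H HP.
  - simpl in H. unfold Concl. rewrite c_0, d_0.
    assert (x*x <= 2) by nia. assert (y*y <= 2) by nia.
    assert (-1 <= x <= 1) by nia. assert (-1 <= y <= 1) by nia.
    assert (x <> 0) by (intro; subst; nia). assert (y <> 0) by (intro; subst; nia).
    left; lia.
  - assert (Hs : ((x^2 + y^2) mod 17 = 0)).
    { rewrite H, pow17S. rewrite Z.mul_assoc, (Z.mul_comm 2 17), <- Z.mul_assoc, Z.mul_comm. apply Z_mod_mult. }
    destruct (sq17 x y Hs) as [h|h].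
    + apply stepA; auto.
    + assert (C : Concl (S k) x (-y)).
      { apply stepA; auto. rewrite <- H; ring. unfold Prim in *. intros [h1 h2]; apply HP; split; [exact h1| Z.div_mod_to_equations; lia].
        replace (x + 4 * - y) with (x - 4*y) by ring; exact h. }
      unfold Concl in *. rewrite Z.abs_opp in C. exact C.
Qed.


Definition AA := mkG 161 240.
Definition BB := mkG 32 48.
Lemma AA_pow : gpow (mkG 4 1) 4 = AA. Proof. reflexivity. Qed.
Lemma AA_eq : AA = gadd g1 (gmul (gZ 5) BB). Proof. reflexivity. Qed.

Lemma L1 (s : nat) : exists R, gpow AA s = gadd g1 (gadd (gmul (gZ (5 * Z.of_nat s)) BB) (gmul (gZ 25) R)).
Proof.
  induction s as [|s [R HR]].
  - exists g0. apply G_eq; reflexivity.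
  - exists (gadd (gmul (gZ (Z.of_nat s)) (gmul BB BB)) (gmul R (gadd g1 (gmul (gZ 5) BB)))).
    change (gpow AA (S s)) with (gmul (gpow AA s) AA). rewrite HR, AA_eq. rewrite Nat2Z.inj_succ.
    assert (E : forall a b, gZ (a * b) = gmul (gZ a) (gZ b)) by (intros; apply G_eq; unfold gZ, gmul; cbn [re im]; ring).
    assert (E2 : forall a b, gZ (a + b) = gadd (gZ a) (gZ b)) by (intros; apply G_eq; unfold gZ, gadd; cbn [re im]; ring).
    rewrite !E. unfold Z.succ. rewrite !E2. ring.
Qed.

Lemma gZ_mul a b : gZ (a * b) = gmul (gZ a) (gZ b).
Proof. apply G_eq; unfold gZ, gmul; cbn [re im]; ring. Qed.

Lemma L2 (s : nat) : (0 < s)%nat -> exists K0 u R, K0 <> 0 /\ u mod 5 <> 0 /\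
  gsub (gpow AA s) g1 = gmul (gZ (5 * K0)) (gadd (gmul (gZ u) BB) (gmul (gZ 5) R)).
Proof.
  induction s as [s IH] using (well_founded_induction lt_wf). intros Hs.
  destruct (Nat.eq_dec (s mod 5) 0) as [H5|H5].
  - assert (Hst : s = (5 * (s / 5))%nat) by (pose proof (Nat.div_mod s 5); lia).
    set (t := (s / 5)%nat) in *. clearbody t.
    destruct (IH t ltac:(lia) ltac:(lia)) as [K0 [u [R [HK [Hu HE]]]]].
    set (xi := gadd (gmul (gZ u) BB) (gmul (gZ 5) R)) in *.
    set (K := gZ (5 * K0)).
    set (k0 := gZ K0).
    exists (5 * K0), u,
      (gadd R (gadd (gmul (gZ 2) (gmul k0 (gmul xi xi)))
                (gadd (gmul (gZ 2) (gmul k0 (gmul K (gmul xi (gmul xi xi)))))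
                 (gadd (gmul k0 (gmul (gmul K K) (gmul (gmul xi xi) (gmul xi xi))))
                   (gmul (gmul k0 k0) (gmul (gmul K K) (gmul xi (gmul (gmul xi xi) (gmul xi xi))))))))).
    split; [lia|]. split; [exact Hu|].
    rewrite Hst, Nat.mul_comm, gpow_mul.
    assert (HA : gpow AA t = gadd g1 (gmul K xi)).
    { transitivity (gadd g1 (gsub (gpow AA t) g1)). ring. rewrite HE. reflexivity. }
    rewrite HA. simpl gpow.
    unfold K. rewrite !gZ_mul. fold k0. unfold xi. ring.
  - destruct (L1 s) as [R HR].
    exists 1, (Z.of_nat s), R. split; [lia|]. split.
    + pose proof (Nat2Z.inj_mod s 5) as H. change (Z.of_nat 5) with 5 in H. rewrite <- H. lia.
    + rewrite HR. rewrite !gZ_mul. ring.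
Qed.

Lemma mul5 a b : a mod 5 <> 0 -> b mod 5 <> 0 -> (a * b) mod 5 <> 0.
Proof.
  intros Ha Hb. rewrite Z.mul_mod by lia.
  pose proof (Z.mod_pos_bound a 5 ltac:(lia)). pose proof (Z.mod_pos_bound b 5 ltac:(lia)).
  assert (Ea : a mod 5 = 1 \/ a mod 5 = 2 \/ a mod 5 = 3 \/ a mod 5 = 4) by lia.
  assert (Eb : b mod 5 = 1 \/ b mod 5 = 2 \/ b mod 5 = 3 \/ b mod 5 = 4) by lia.
  destruct Ea as [E|[E|[E|E]]]; destruct Eb as [F|[F|[F|F]]]; rewrite E, F; discriminate.
Qed.

Lemma re_gZ a v : re (gmul (gZ a) v) = a * re v.
Proof. unfold gmul, gZ; cbn [re im]. ring. Qed.
Lemma im_gZ a v : im (gmul (gZ a) v) = a * im v.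
Proof. unfold gmul, gZ; cbn [re im]. ring. Qed.

Lemma lte_gen w s : (0 < s)%nat -> exists K0 u e1 e2, K0 <> 0 /\ u mod 5 <> 0 /\
  re (gmul w (gpow AA s)) - re w = 5 * K0 * (u * re (gmul w BB) + 5 * e1) /\
  im (gmul w (gpow AA s)) - im w = 5 * K0 * (u * im (gmul w BB) + 5 * e2).
Proof.
  intros Hs. destruct (L2 s Hs) as [K0 [u [R [HK [Hu HE]]]]].
  exists K0, u, (re (gmul w R)), (im (gmul w R)). split; [exact HK|]. split; [exact Hu|].
  assert (E : gmul w (gpow AA s) = gadd w (gadd (gmul (gZ (5 * K0 * u)) (gmul w BB)) (gmul (gZ (25 * K0)) (gmul w R)))).
  { transitivity (gadd w (gmul w (gsub (gpow AA s) g1))). ring. rewrite HE. rewrite !gZ_mul. ring. }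
  rewrite E. rewrite !re_add, !im_add, !re_gZ, !im_gZ. split; ring.
Qed.

Lemma nz5 K0 u r e : K0 <> 0 -> u mod 5 <> 0 -> r mod 5 <> 0 -> 5 * K0 * (u * r + 5 * e) <> 0.
Proof.
  intros HK Hu Hr H. pose proof (mul5 u r Hu Hr) as Hm.
  assert (u * r + 5 * e = 0) by nia.
  apply Hm. replace (u*r) with ((-e) * 5) by lia. apply Z_mod_mult.
Qed.


Definition MM := 84825.
Fixpoint cdm (n : nat) : Z * Z :=
  match n with O => (1, 1) | S k => let '(a, b) := cdm k in ((4*a - b) mod MM, (a + 4*b) mod MM) end.

Lemma modE a a' : a mod MM = a' mod MM -> exists k, a = a' + k * MM.
Proof. intros H. exists (a / MM - a' / MM). pose proof (Z.div_mod a MM). pose proof (Z.div_mod a' MM). unfold MM in *. lia. Qed.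

Lemma cdm_ok n : cdm n = (c n mod MM, d n mod MM).
Proof.
  induction n.
  - reflexivity.
  - change (cdm (S n)) with (let '(a,b) := cdm n in ((4*a-b) mod MM, (a+4*b) mod MM)). rewrite IHn. cbv beta iota. rewrite c_S, d_S. f_equal.
    + destruct (modE (c n mod MM) (c n)) as [k1 E1]. apply Z.mod_mod; unfold MM; lia.
      destruct (modE (d n mod MM) (d n)) as [k2 E2]. apply Z.mod_mod; unfold MM; lia.
      rewrite E1, E2. replace (4 * (c n + k1 * MM) - (d n + k2 * MM)) with ((4 * c n - d n) + (4*k1 - k2) * MM) by ring.
      apply Z_mod_plus_full.
    + destruct (modE (c n mod MM) (c n)) as [k1 E1]. apply Z.mod_mod; unfold MM; lia.
      destruct (modE (d n mod MM) (d n)) as [k2 E2]. apply Z.mod_mod; unfold MM; lia.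
      rewrite E1, E2. replace (c n + k1 * MM + 4 * (d n + k2 * MM)) with ((c n + 4 * d n) + (k1 + 4*k2) * MM) by ring.
      apply Z_mod_plus_full.
Qed.

Lemma cdm_840 : cdm 840 = (1, 1). Proof. vm_compute. reflexivity. Qed.

Lemma cdm_add n : cdm (n + 840) = cdm n.
Proof.
  induction n.
  - exact cdm_840.
  - change (S n + 840)%nat with (S (n + 840)). simpl cdm. rewrite IHn. reflexivity.
Qed.

Lemma cdm_mod n : cdm n = cdm (n mod 840).
Proof.
  induction n as [n IH] using (well_founded_induction lt_wf).
  destruct (Nat.lt_ge_cases n 840) as [h|h].
  - rewrite Nat.mod_small by exact h. reflexivity.
  - replace n with ((n - 840) + 840)%nat at 1 by lia. rewrite cdm_add.
    rewrite IH by lia.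
    replace (n mod 840)%nat with ((n - 840) mod 840)%nat. reflexivity.
    replace n with ((n - 840) + 1 * 840)%nat at 2 by lia. rewrite Nat.Div0.mod_add. reflexivity.
Qed.

Definition Pchk (N : Z) (ab : Z * Z) : bool :=
  let '(a, b) := ab in
  if N mod 2 =? 1 then
    if N mod 4 =? 1 then
      (a mod 3 =? 0) && (b mod 5 =? 0) && ((N mod 5 =? 0) || negb (b mod 25 =? 0))
      && ((N mod 3 =? 0) || negb (a mod 9 =? 0)) && negb (b mod 29 =? 24) && negb (a mod 5 =? 2)
    else
      (a mod 5 =? 0) && (b mod 3 =? 0) && ((N mod 5 =? 0) || negb (a mod 25 =? 0))
      && ((N mod 3 =? 0) || negb (b mod 9 =? 0)) && negb (a mod 13 =? 8) && negb (b mod 5 =? 3) && negb (b mod 5 =? 2)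
  else true.

Lemma Pchk_all : forallb (fun n => Pchk (Z.of_nat n) (cdm n)) (seq 0 840) = true.
Proof. vm_compute. reflexivity. Qed.

Lemma mmd a m k : (k | m) -> (a mod m) mod k = a mod k.
Proof. apply Z.mod_mod_divide. Qed.

Lemma facts n : let N := Z.of_nat n in N mod 2 = 1 ->
 (N mod 4 = 1 -> c n mod 3 = 0 /\ d n mod 5 = 0 /\ (N mod 5 <> 0 -> d n mod 25 <> 0) /\
    (N mod 3 <> 0 -> c n mod 9 <> 0) /\ d n mod 29 <> 24 /\ c n mod 5 <> 2) /\
 (N mod 4 = 3 -> c n mod 5 = 0 /\ d n mod 3 = 0 /\ (N mod 5 <> 0 -> c n mod 25 <> 0) /\
    (N mod 3 <> 0 -> d n mod 9 <> 0) /\ c n mod 13 <> 8 /\ d n mod 5 <> 3 /\ d n mod 5 <> 2).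
Proof.
  intros N HN.
  assert (H : Pchk (Z.of_nat (n mod 840)) (cdm (n mod 840)) = true).
  { pose proof Pchk_all as H. rewrite forallb_forall in H. apply H. apply in_seq.
    pose proof (Nat.mod_upper_bound n 840). lia. }
  rewrite <- cdm_mod, cdm_ok, Nat2Z.inj_mod in H. fold N in H. change (Z.of_nat 840) with 840 in H.
  unfold Pchk, MM in H.
  rewrite !(mmd N 840) in H by (exists 420; reflexivity) || (exists 210; reflexivity) || (exists 168; reflexivity) || (exists 280; reflexivity) || idtac.
  rewrite ?(mmd N 840 2), ?(mmd N 840 4), ?(mmd N 840 5), ?(mmd N 840 3) in H
    by first [exists 420; reflexivity | exists 210; reflexivity | exists 168; reflexivity | exists 280; reflexivity].
  rewrite ?(mmd (c n) 84825 3), ?(mmd (c n) 84825 5), ?(mmd (c n) 84825 9), ?(mmd (c n) 84825 25),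
    ?(mmd (c n) 84825 13), ?(mmd (c n) 84825 29),
    ?(mmd (d n) 84825 3), ?(mmd (d n) 84825 5), ?(mmd (d n) 84825 9), ?(mmd (d n) 84825 25),
    ?(mmd (d n) 84825 13), ?(mmd (d n) 84825 29) in H
    by first [exists 28275; reflexivity | exists 16965; reflexivity | exists 9425; reflexivity
             | exists 3393; reflexivity | exists 6525; reflexivity | exists 2925; reflexivity].
  rewrite HN in H. cbv beta iota in H. change (1 =? 1) with true in H. cbv iota in H.
  split; intros H4; rewrite H4 in H; cbn [Z.eqb Pos.eqb] in H.
  all: repeat rewrite Bool.andb_true_iff in H; repeat rewrite Bool.orb_true_iff in H;
    repeat rewrite Bool.negb_true_iff in H; repeat rewrite Z.eqb_eq in H; repeat rewrite Z.eqb_neq in H.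
  all: tauto.
Qed.


Lemma zz_shift n0 s : zz (n0 + 4 * s) = gmul (zz n0) (gpow AA s).
Proof. unfold zz. rewrite gpow_add, gpow_mul, AA_pow. ring. Qed.

Lemma lte_re n0 s : (0 < s)%nat -> re (gmul (zz n0) BB) mod 5 <> 0 -> c (n0 + 4 * s) <> c n0.
Proof.
  intros Hs Hr. unfold c. rewrite zz_shift.
  destruct (lte_gen (zz n0) s Hs) as [K0 [u [e1 [e2 [HK [Hu [E1 E2]]]]]]].
  pose proof (nz5 K0 u _ e1 HK Hu Hr). lia.
Qed.
Lemma lte_im n0 s : (0 < s)%nat -> im (gmul (zz n0) BB) mod 5 <> 0 -> d (n0 + 4 * s) <> d n0.
Proof.
  intros Hs Hr. unfold d. rewrite zz_shift.
  destruct (lte_gen (zz n0) s Hs) as [K0 [u [e1 [e2 [HK [Hu [E1 E2]]]]]]].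
  pose proof (nz5 K0 u _ e2 HK Hu Hr). lia.
Qed.

Lemma lteA s : (0 < s)%nat -> c (1 + 4 * s) <> 3.
Proof. intros Hs. apply (lte_re 1 s Hs). vm_compute. discriminate. Qed.
Lemma lteB s : (0 < s)%nat -> d (1 + 4 * s) <> 5.
Proof. intros Hs. apply (lte_im 1 s Hs). vm_compute. discriminate. Qed.
Lemma lteC s : (0 < s)%nat -> c (3 + 4 * s) <> 5.
Proof. intros Hs. apply (lte_re 3 s Hs). vm_compute. discriminate. Qed.

Lemma pw r m : 0 < r -> (1 <= m)%nat ->
  r ^ Z.of_nat m = r \/ r ^ Z.of_nat m = r * r \/ (r ^ Z.of_nat m) mod (r * r * r) = 0.
Proof.
  intros Hr Hm.
  destruct m as [|[|[|m]]]; [lia| left; simpl; lia | right; left; simpl; lia |].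
  right; right. replace (Z.of_nat (S (S (S m)))) with (3 + Z.of_nat m) by lia.
  rewrite Z.pow_add_r by lia. replace (r ^ 3) with (r * r * r) by ring.
  rewrite Z.mul_comm. apply Z_mod_mult.
Qed.

Lemma split4 p k : Z.of_nat p mod 4 = Z.of_nat k -> (k < 4)%nat -> exists s, p = (k + 4 * s)%nat.
Proof.
  intros H Hk. exists (p / 4)%nat. pose proof (Nat.div_mod p 4). pose proof (Nat2Z.inj_mod p 4).
  change (Z.of_nat 4) with 4 in H1. rewrite H in H1. lia.
Qed.



Lemma absmod k Y D : 0 < k -> Z.abs Y = Z.abs D -> (Y mod k = 0 <-> D mod k = 0).
Proof.
  intros Hk H. assert (D = Y \/ D = - Y) as [->| ->] by lia. tauto.
  split; intro h.
  - apply Z_mod_zero_opp_full; exact h.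
  - rewrite <- (Z.opp_involutive Y). apply Z_mod_zero_opp_full; exact h.
Qed.

Lemma powcase r m D : 0 < r -> (1 <= m)%nat -> Z.abs D = r ^ Z.of_nat m -> D mod (r * r) <> 0 -> D = r \/ D = - r.
Proof.
  intros Hr Hm HD Hn.
  destruct (pw r m Hr Hm) as [h|[h|h]].
  - lia.
  - exfalso. apply Hn. apply (absmod (r*r) (r ^ Z.of_nat m) D); [nia | lia |]. rewrite h. apply Z_mod_same_full.
  - exfalso. apply Hn. apply (absmod (r*r) (r ^ Z.of_nat m) D); [nia | lia |].
    rewrite <- (Z.mod_mod_divide _ (r*r*r)). rewrite h. reflexivity. exists r. ring.
Qed.

Lemma powval r m v : 0 < r -> (1 <= m)%nat -> r ^ Z.of_nat m = v -> v <> r -> v <> r * r -> v mod (r*r*r) <> 0 -> False.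
Proof. intros Hr Hm E h1 h2 h3. destruct (pw r m Hr Hm) as [h|[h|h]]; rewrite E in h; tauto. Qed.

Lemma core (p : nat) (X Y : Z) :
  Z.of_nat p mod 2 = 1 -> p <> 1%nat ->
  X^2 + Y^2 = 2 * 17 ^ Z.of_nat p -> Prim X Y -> 0 <= X -> 0 <= Y ->
  (Y mod 3 = 0 -> exists m, (1 <= m)%nat /\ Y = 3 ^ Z.of_nat m) ->
  (Y mod 5 = 0 -> exists m, (1 <= m)%nat /\ Y = 5 ^ Z.of_nat m) ->
  (Z.of_nat p mod 3 = 0 -> p = 3%nat) -> (Z.of_nat p mod 5 = 0 -> p = 5%nat) ->
  p = 3%nat /\ Y = 5 /\ X = 99.
Proof.
  intros Hodd Hp1 HE HP HX HY H3 H5 Hp3 Hp5.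
  pose proof (rep p X Y HE HP) as HC. unfold Concl in HC. clear HE HP.
  rewrite (Z.abs_eq Y HY), (Z.abs_eq X HX) in HC.
  destruct (facts p Hodd) as [F1 F3].
  assert (H4 : Z.of_nat p mod 4 = 1 \/ Z.of_nat p mod 4 = 3).
  { clear -Hodd. Z.div_mod_to_equations. lia. }
  destruct H4 as [H4|H4].
  - destruct (F1 H4) as [f1 [f2 [f3 [f4 [f5 f6]]]]]. clear F1 F3.
    destruct (split4 p 1 H4 ltac:(lia)) as [s Hs].
    assert (Hs0 : (0 < s)%nat) by (clear -Hs Hp1; lia).
    destruct HC as [[e1 e2]|[e1 e2]].
    +
      destruct H5 as [m [Hm EY]].
      { apply (absmod 5 Y (d p)); [lia | rewrite Z.abs_eq by exact HY; exact e2 | exact f2]. }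
      destruct (Z.eq_dec (Z.of_nat p mod 5) 0) as [h5|h5].
      * exfalso. specialize (Hp5 h5). subst p. change (d 5) with 1525 in e2.
        apply (powval 5 m 1525); try lia. intro h; vm_compute in h; discriminate h.
      * specialize (f3 h5).
        destruct (powcase 5 m (d p) ltac:(lia) Hm ltac:(rewrite <- EY; lia) f3) as [h'|h'].
        -- subst p. exact (False_ind _ (lteB s Hs0 h')).
        -- exfalso. rewrite h' in f5. apply f5. reflexivity.
    +
      destruct H3 as [m [Hm EY]].
      { apply (absmod 3 Y (c p)); [lia | rewrite Z.abs_eq by exact HY; exact e2 | exact f1]. }
      assert (h3 : Z.of_nat p mod 3 <> 0).
      { intro h. specialize (Hp3 h). clear -Hp3 Hs. lia. }
      specialize (f4 h3).
      destruct (powcase 3 m (c p) ltac:(lia) Hm ltac:(rewrite <- EY; lia) f4) as [h'|h'].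
      * subst p. exact (False_ind _ (lteA s Hs0 h')).
      * exfalso. rewrite h' in f6. apply f6. reflexivity.
  - destruct (F3 H4) as [f1 [f2 [f3 [f4 [f5 [f6 f7]]]]]]. clear F1 F3.
    destruct (split4 p 3 H4 ltac:(lia)) as [s Hs].
    destruct HC as [[e1 e2]|[e1 e2]].
    +
      destruct H3 as [m [Hm EY]].
      { apply (absmod 3 Y (d p)); [lia | rewrite Z.abs_eq by exact HY; exact e2 | exact f2]. }
      destruct (Z.eq_dec (Z.of_nat p mod 3) 0) as [h3|h3].
      * exfalso. specialize (Hp3 h3). subst p. change (d 3) with 99 in e2.
        apply (powval 3 m 99); try lia. intro h; vm_compute in h; discriminate h.
      * specialize (f4 h3).
        destruct (powcase 3 m (d p) ltac:(lia) Hm ltac:(rewrite <- EY; lia) f4) as [h'|h'];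
          exfalso; rewrite h' in f6, f7. apply f6; reflexivity. apply f7; reflexivity.
    +
      destruct H5 as [m [Hm EY]].
      { apply (absmod 5 Y (c p)); [lia | rewrite Z.abs_eq by exact HY; exact e2 | exact f1]. }
      assert (h5 : Z.of_nat p mod 5 <> 0).
      { intro h. specialize (Hp5 h). clear -Hp5 Hs. lia. }
      specialize (f3 h5).
      destruct (powcase 5 m (c p) ltac:(lia) Hm ltac:(rewrite <- EY; lia) f3) as [h'|h'].
      * destruct s as [|s].
        -- subst p. vm_compute in e1, e2. split; [reflexivity|]. split; assumption.
        -- exfalso. subst p. exact (lteC (S s) ltac:(lia) h').
      * exfalso. rewrite h' in f5. apply f5. reflexivity.
Qed.


Lemma odd_cd j : Z.of_nat j mod 2 = 1 -> (c j mod 3 = 0 \/ c j mod 5 = 0) /\ (d j mod 3 = 0 \/ d j mod 5 = 0).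
Proof.
  intros H. destruct (facts j H) as [F1 F3].
  assert (H4 : Z.of_nat j mod 4 = 1 \/ Z.of_nat j mod 4 = 3).
  { clear -H. Z.div_mod_to_equations. lia. }
  destruct H4 as [h|h]; [destruct (F1 h) as [? [? _]] | destruct (F3 h) as [? [? _]]]; tauto.
Qed.

Lemma not_one j D : Z.of_nat j mod 2 = 1 -> (D = c j \/ D = d j) -> Z.abs 1 = Z.abs D -> False.
Proof.
  intros Hj HD Ha. destruct (odd_cd j Hj) as [h1 h2].
  assert (HH : D mod 3 = 0 \/ D mod 5 = 0) by (destruct HD; subst; tauto).
  destruct HH as [h|h].
  - apply (absmod 3 1 D) in h; [discriminate h | lia | exact Ha].
  - apply (absmod 5 1 D) in h; [discriminate h | lia | exact Ha].
Qed.

Lemma no17 m : forall j X, Z.of_nat j mod 2 = 1 ->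
  X^2 + (17 ^ Z.of_nat m)^2 = 2 * 17 ^ Z.of_nat j -> False.
Proof.
  induction m as [|m IH]; intros j X Hj HE.
  - simpl in HE. assert (HP : Prim X 1) by (intros [_ h]; discriminate h).
    destruct (rep j X 1 HE HP) as [[_ h]|[_ h]].
    + exact (not_one j (d j) Hj (or_intror eq_refl) h).
    + exact (not_one j (c j) Hj (or_introl eq_refl) h).
  - destruct j as [|j]. { simpl in Hj. discriminate. }
    rewrite pow17S in HE. rewrite Nat2Z.inj_succ, Z.pow_succ_r in HE by lia.
    assert (HX : X mod 17 = 0).
    { assert (h : (X^2 + 0^2) mod 17 = 0).
      { assert (E2 : (17 * 17 ^ Z.of_nat m)^2 = 17 * (17 * (17 ^ Z.of_nat m)^2)) by ring.
        assert (E3 : X^2 + 0^2 = (2 * 17 ^ Z.of_nat j - 17 * (17 ^ Z.of_nat m)^2) * 17) by lia.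
        rewrite E3. apply Z_mod_mult. }
      destruct (sq17 X 0 h) as [h'|h']; rewrite Z.mul_0_r in h'; [rewrite Z.add_0_r in h' | rewrite Z.sub_0_r in h']; exact h'. }
    assert (EX : X = 17 * (X / 17)) by (pose proof (Z.div_mod X 17); lia).
    set (X1 := X / 17) in *. clearbody X1. subst X.
    destruct j as [|j].
    + change (Z.of_nat 0) with 0 in HE. rewrite Z.pow_0_r in HE.
      assert (0 < 17 ^ Z.of_nat m) by (apply Z.pow_pos_nonneg; lia).
      assert (E4 : (17 * X1)^2 = 289 * X1^2) by ring.
      assert (E5 : (17 * 17 ^ Z.of_nat m)^2 = 289 * (17 ^ Z.of_nat m)^2) by ring.
      assert (0 <= X1^2) by nia. assert (1 <= (17 ^ Z.of_nat m)^2) by nia. lia.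
    + rewrite pow17S in HE.
      assert (HE' : X1^2 + (17 ^ Z.of_nat m)^2 = 2 * 17 ^ Z.of_nat j).
      { assert (E4 : (17 * X1)^2 = 289 * X1^2) by ring.
        assert (E5 : (17 * 17 ^ Z.of_nat m)^2 = 289 * (17 ^ Z.of_nat m)^2) by ring.
        lia. }
      apply (IH j X1); [|exact HE'].
      rewrite !Nat2Z.inj_succ in Hj. clear -Hj. Z.div_mod_to_equations. lia.
Qed.

Local Close Scope Z_scope.
From mathcomp Require Import all_boot.

Lemma Zof_exp a b : Z.of_nat (a ^ b) = (Z.of_nat a ^ Z.of_nat b)%Z.
Proof.
  elim: b => [|b IH]; first by [].
  rewrite expnS Nat2Z.inj_succ Z.pow_succ_r; last by lia.
  rewrite -IH. rewrite mulnE Nat2Z.inj_mul. reflexivity.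
Qed.

Lemma dvd_of_Zmod n k : (0 < k)%N -> (Z.of_nat n mod Z.of_nat k = 0)%Z -> k %| n.
Proof.
  move=> Hk H. have E := Nat2Z.inj_mod n k. rewrite -E in H.
  have H0 : Nat.modulo n k = 0%N by apply Nat2Z.inj; exact H.
  apply/dvdnP. exists (Nat.div n k). rewrite mulnE.
  by rewrite {1}(Nat.div_mod_eq n k) H0 Nat.add_0_r Nat.mul_comm.
Qed.

Lemma prime_dvd_pow r q m : prime r -> prime q -> r %| q ^ m -> r = q.
Proof.
  move=> pr pq. rewrite Euclid_dvdX // => /andP [h _]. by apply/eqP; rewrite -dvdn_prime2.
Qed.

Lemma odd_Z p : odd p -> (Z.of_nat p mod 2 = 1)%Z.
Proof.
  move=> Ho. have E := odd_double_half p. rewrite Ho -addnn in E.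
  rewrite -E. rewrite Nat2Z.inj_add Nat2Z.inj_add.
  have -> : (Z.of_nat 1 + (Z.of_nat p./2 + Z.of_nat p./2) = 1 + Z.of_nat p./2 * 2)%Z by lia.
  by rewrite Z_mod_plus_full.
Qed.

Lemma pmod_eq r p : prime r -> prime p -> (Z.of_nat p mod Z.of_nat r = 0)%Z -> p = r.
Proof.
  move=> pr pp H. have := dvd_of_Zmod p r (prime_gt0 pr) H.
  rewrite dvdn_prime2 // => /eqP ->. by [].
Qed.

Theorem theorem3 (m p q x : nat) :
  0 < m -> 0 < x -> prime p -> odd p -> prime q -> odd q ->
  x ^ 2 + q ^ (2 * m) = 2 * 17 ^ p ->
  (m, p, q, x) = (1, 3, 5, 99).
Proof.
  move=> Hm Hx pp op pq oq E.
  have EZ : (Z.of_nat x ^ 2 + Z.of_nat (q ^ m) ^ 2 = 2 * 17 ^ Z.of_nat p)%Z.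
  { have E' := f_equal Z.of_nat E.
    have e1 : Z.of_nat (2 * 17 ^ p) = (2 * 17 ^ Z.of_nat p)%Z by rewrite mulnE Nat2Z.inj_mul Zof_exp.
    have e2 : Z.of_nat (x ^ 2 + q ^ (2 * m)) = (Z.of_nat x ^ 2 + Z.of_nat (q ^ m) ^ 2)%Z.
    { rewrite addnE Nat2Z.inj_add !Zof_exp -Z.pow_mul_r; [|lia|lia].
      rewrite mulnE Nat2Z.inj_mul. f_equal. f_equal. lia. }
    by rewrite -e1 -e2. }
  have Hodd := odd_Z p op.
  case: (eqVneq q 17) => Hq.
  { exfalso. subst q. apply: (no17 m p (Z.of_nat x) Hodd). move: EZ; rewrite Zof_exp; exact. }
  have HP : Prim (Z.of_nat x) (Z.of_nat (q ^ m)).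
  { move=> [_ h]. have := dvd_of_Zmod (q ^ m) 17 isT h.
    move/(prime_dvd_pow 17 q m isT pq) => h17. by rewrite h17 eqxx in Hq. }
  have Hp1 : p <> 1%N by move=> h; rewrite h in pp.
  have H3 : (Z.of_nat (q ^ m) mod 3 = 0 -> exists m0, (1 <= m0)%coq_nat /\ Z.of_nat (q ^ m) = 3 ^ Z.of_nat m0)%Z.
  { move=> h. have := dvd_of_Zmod (q ^ m) 3 isT h. move/(prime_dvd_pow 3 q m isT pq) => h3.
    exists m. split; first by move/leP: Hm. by rewrite -h3 Zof_exp. }
  have H5 : (Z.of_nat (q ^ m) mod 5 = 0 -> exists m0, (1 <= m0)%coq_nat /\ Z.of_nat (q ^ m) = 5 ^ Z.of_nat m0)%Z.
  { move=> h. have := dvd_of_Zmod (q ^ m) 5 isT h. move/(prime_dvd_pow 5 q m isT pq) => h5.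
    exists m. split; first by move/leP: Hm. by rewrite -h5 Zof_exp. }
  have Hp3 : (Z.of_nat p mod 3 = 0)%Z -> p = 3 := pmod_eq 3 p isT pp.
  have Hp5 : (Z.of_nat p mod 5 = 0)%Z -> p = 5 := pmod_eq 5 p isT pp.
  have [R1 [R2 R3]] := core p (Z.of_nat x) (Z.of_nat (q ^ m)) Hodd Hp1 EZ HP ltac:(lia) ltac:(lia) H3 H5 Hp3 Hp5.
  have Eq5 : q ^ m = 5 by apply: Nat2Z.inj; rewrite R2.
  have Ex : x = 99 by apply: Nat2Z.inj; rewrite R3.
  have Hq5 : q = 5.
  { apply/eqP. rewrite -dvdn_prime2 //. rewrite -Eq5. by rewrite dvdn_exp. }
  subst q. have Hm1 : m = 1.
  { apply/eqP. by rewrite -(eqn_exp2l _ _ (isT : 1 < 5)) Eq5. }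
  by rewrite Hm1 R1 Ex.
Qed.
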